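(* Let $L$ be as in the context, $P$ a cell of $\Lambda(L)$, and $f$ an automorphism of $L$ with $f(P)=P$ which is $P$-direct (so $f$ is induced by a symmetry of the Coxeter graph of $P$). Suppose $v\in\Phi^b$ is a $2$-root (a vertex of the Coxeter graph with $v^2=2$) with $f(v)=v$, let $L_v=\{x\in L: xv=0\}$ and let $f_v$ be the restriction of $f$ to $L_v$. If $f$ is $\mathbb{Z}/3$-reversing, then $f_v$ is $\mathbb{Z}/3$-reversing, and $f_v$ preserves and is $P_v$-direct for some cell $P_v$ of $\Lambda(L_v)$.
   Context: Lattices considered: integral lattices $L$ of signature $(n,1)$ with discriminant group $L^*/L\cong\mathbb{Z}/3\oplus D$, $D$ $2$-periodic; for such $L$, $V_k=\{v\in L:v^2=k,\ 2vw/v^2\in\mathbb{Z}\ \forall w\in L\}$ ($k=2,6$), $\Phi=V_2\cup V_6$, assumed of full rank. $\Lambda(L)=\{x\in L\otimes\mathbb{R}:x^2<0\}/\mathbb{R}^*$, $\Lambda^\sharp(L)=\{x: x^2<0\}/\mathbb{R}_{>0}$; cells of $\Lambda(L)$ are closures of components of the complement of the hyperplanes $v^\perp$, $v\in\Phi$ (the same definitions apply to $L_v$ with its own $V_2,V_6$). A cell $P$ lifts to two opposite pieces $\pm P^\sharp$ in $\Lambda^\sharp$; an automorphism $g$ with $g(P)=P$ is $P$-direct if $g(P^\sharp)=P^\sharp$ and $P$-reversing otherwise. $\Phi^b$ is the set of roots $v\in\Phi$, pairing negatively with an interior point of $P^\sharp$, whose hyperplanes $v^\perp$ support the walls of $P$.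 $g$ is $\mathbb{Z}/3$-direct if it acts trivially on the $3$-primary part of $L^*/L$, and $\mathbb{Z}/3$-reversing otherwise. *)

(* Defs.v *)
From HB Require Import structures.
From mathcomp Require Import all_boot all_order all_algebra.
From mathcomp Require Import all_classical all_reals all_analysis.
Set Implicit Arguments. Unset Strict Implicit. Unset Printing Implicit Defensive.
Import Order.TTheory GRing.Theory Num.Theory.
Local Open Scope classical_set_scope.
Local Open Scope ring_scope.

(* Convention: the ambient lattice is Z^m (integer row vectors) with the
   integral symmetric Gram matrix G : b(x,y) = x G y^T.  A (sub)lattice M is
   a subset of Z^m (for L itself M = setT, for L_v it is v^perp).
   Automorphisms act on row vectors on the right: x |-> x *m F. *)

Section Defs.
Variable m : nat.
Implicit Types (G F : 'M[int]_m) (M : set 'rV[int]_m).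

Definition toK (K : pzRingType) (x : 'rV[int]_m) : 'rV[K]_m :=
  map_mx (fun z : int => z%:~R) x.

Arguments toK K x : clear implicits.
Definition bZ G (x y : 'rV[int]_m) : int := (x *m G *m y^T) 0 0.
Definition bK (K : pzRingType) G (x y : 'rV[K]_m) : K :=
  (x *m map_mx (fun z : int => z%:~R) G *m y^T) 0 0.

(* K-span of a set of lattice vectors: M (x) K inside K^m *)
Definition kspan (K : pzRingType) M : set 'rV[K]_m :=
  [set x | exists k (c : 'I_k -> K) (w : 'I_k -> 'rV[int]_m),
     (forall i, M (w i)) /\ x = \sum_(i < k) c i *: toK K (w i)].

Arguments kspan : clear implicits.
Arguments kspan K M _ : clear implicits.
Definition is_kroot G M (k : int) (v : 'rV[int]_m) :=
  M v /\ bZ G v v = k /\ forall w, M w -> (k %| 2 * bZ G v w)%Z.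
Definition Phi G M : set 'rV[int]_m :=
  [set v | is_kroot G M 2 v \/ is_kroot G M 6 v].

Definition lattice_aut G M F :=
  [/\ forall x, M x -> M (x *m F),
      forall y, M y -> exists2 x, M x & x *m F = y
    & forall x y, M x -> M y -> bZ G (x *m F) (y *m F) = bZ G x y].

Definition embQ M : set 'rV[rat]_m := [set toK rat w | w in M].
Definition dual G M : set 'rV[rat]_m :=
  [set x | kspan rat M x /\
     forall y, M y -> exists z : int, bK G x (toK rat y) = z%:~R].

(* g acts trivially on the 3-primary part of M^*/M *)
Definition z3_direct G M F :=
  forall x, dual G M x -> (exists k : nat, embQ M ((3 ^+ k) *: x)) ->
    embQ M (x *m map_mx (fun z : int => z%:~R) F - x).
Definition z3_reversing G M F := ~ z3_direct G M F.

(* M^*/M ~= Z/3 (+) D with D 2-periodic (written out: a class [a] of order 3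
   such that every class differs from a multiple of [a] by a 2-torsion class) *)
Definition disc_Z3_2per G M :=
  exists a, [/\ dual G M a, ~ embQ M a, embQ M (3 *: a) &
    forall x, dual G M x ->
      exists j : int, embQ M (2 *: (x - j%:~R *: a))].

Section Real.
Variable R : realType.

Definition cone G M : set 'rV[R]_m := [set x | kspan R M x /\ bK G x x < 0].
Definition reg G M : set 'rV[R]_m :=
  [set x | cone G M x /\ forall v, Phi G M v -> bK G x (toK R v) != 0].
(* lift P^# in Lambda^#(M) (seen as an R_{>0}-stable cone) of the cell
   containing the regular point x0 *)
Definition chamber G M (x0 : 'rV[R]_m) := connected_component (reg G M : set 'rV[R^o]_m) x0.
Definition cell_lift G M (x0 : 'rV[R]_m) : set 'rV[R]_m :=
  cone G M `&` closure (chamber G M x0 : set 'rV[R^o]_m).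
(* the cell P in Lambda(M), seen as an R^*-stable subset of the cone *)
Definition cell G M (x0 : 'rV[R]_m) : set 'rV[R]_m :=
  cell_lift G M x0 `|` [set - x | x in cell_lift G M x0].

Definition act F (S : set 'rV[R]_m) : set 'rV[R]_m :=
  (fun x => x *m map_mx (fun z : int => z%:~R) F) @` S.

(* Phi^b : roots negative on an interior point of P^#, whose hyperplane
   supports a wall (codimension-one face) of P^# *)
Definition Phi_b G M (x0 : 'rV[R]_m) : set 'rV[int]_m :=
  [set v | [/\ Phi G M v,
     exists2 x, interior (cell_lift G M x0 : set 'rV[R^o]_m) x & bK G x (toK R v) < 0 &
     exists y, [/\ cell_lift G M x0 y, bK G y (toK R v) = 0 &
        \forall z \near (y : 'rV[R^o]_m), (kspan R M z /\ bK G z (toK R v) = 0) ->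
                           cell_lift G M x0 z]]].

Definition full_rank G M := forall x : 'rV[R]_m, kspan R M x -> kspan R (Phi G M) x.

End Real.

Definition Lv G (v : 'rV[int]_m) : set 'rV[int]_m := [set x | bZ G x v = 0].

End Defs.

Definition signature_n1 (R : realType) (n : nat) (G : 'M[int]_n.+1) :=
  G^T = G /\ exists2 P : 'M[R]_n.+1, P \in unitmx &
    P *m map_mx (fun z : int => z%:~R) G *m P^T
    = diag_mx (\row_(i < n.+1) (if i == ord_max then -1 else 1)).

(* Main.v *)
Require Import Defs.
From HB Require Import structures.
From mathcomp Require Import all_boot all_order all_algebra.
From mathcomp Require Import all_classical all_reals all_analysis.
From mathcomp Require Import ring lra.
Import Order.TTheory GRing.Theory Num.Theory.
Import numFieldNormedType.Exports.
Local Open Scope classical_set_scope.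
Local Open Scope ring_scope.
Set Implicit Arguments. Unset Strict Implicit. Unset Printing Implicit Defensive.
Section Alg.
Variable m : nat.
Implicit Types (G F : 'M[int]_m).

Notation iK K := (fun z : int => (z%:~R : K)).

Lemma toKD (K : comNzRingType) (a b : 'rV[int]_m) : toK K (a + b) = toK K a + toK K b.
Proof. by rewrite /toK map_mxD. Qed.
Lemma toKB (K : comNzRingType) (a b : 'rV[int]_m) : toK K (a - b) = toK K a - toK K b.
Proof. by rewrite /toK map_mxB. Qed.
Lemma toKZ (K : comNzRingType) (c : int) (a : 'rV[int]_m) : toK K (c *: a) = c%:~R *: toK K a.
Proof. by rewrite /toK map_mxZ. Qed.
Lemma toKM (K : comNzRingType) (a : 'rV[int]_m) (F : 'M[int]_m) :
  toK K (a *m F) = toK K a *m map_mx (iK K) F.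
Proof. by rewrite /toK map_mxM. Qed.

Lemma bKE (K : comNzRingType) G (x y : 'rV[K]_m) :
  bK G x y = \sum_(j < m) x 0 j * (map_mx (iK K) G *m y^T) j 0.
Proof. by rewrite /bK -mulmxA mxE. Qed.

Lemma bK_toK (K : comNzRingType) G a b : bK G (toK K a) (toK K b) = (bZ G a b)%:~R.
Proof. by rewrite /bK /bZ /toK map_trmx -!map_mxM mxE. Qed.

Lemma bKDl (K : comNzRingType) G (x y z : 'rV[K]_m) : bK G (x + y) z = bK G x z + bK G y z.
Proof. by rewrite /bK !mulmxDl mxE. Qed.
Lemma bKZl (K : comNzRingType) G (c : K) (x z : 'rV[K]_m) : bK G (c *: x) z = c * bK G x z.
Proof. by rewrite /bK -!scalemxAl mxE. Qed.
Lemma bKNl (K : comNzRingType) G (x z : 'rV[K]_m) : bK G (- x) z = - bK G x z.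
Proof. by rewrite /bK !mulNmx mxE. Qed.
Lemma bKBl (K : comNzRingType) G (x y z : 'rV[K]_m) : bK G (x - y) z = bK G x z - bK G y z.
Proof. by rewrite bKDl bKNl. Qed.
Lemma bKsuml (K : comNzRingType) G k (f : 'I_k -> 'rV[K]_m) z :
  bK G (\sum_(i < k) f i) z = \sum_(i < k) bK G (f i) z.
Proof.
elim: k f => [|k IH] f; first by rewrite !big_ord0 /bK !mul0mx mxE.
by rewrite !big_ord_recr bKDl IH.
Qed.

Lemma entryT (K : comNzRingType) (M : 'M[K]_1) : M 0 0 = (M^T) 0 0.
Proof. by rewrite mxE. Qed.

Lemma bK_sym (K : comNzRingType) G (x y : 'rV[K]_m) : G^T = G -> bK G x y = bK G y x.
Proof.
move=> HG; rewrite /bK [LHS]entryT.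
by rewrite !trmx_mul trmxK map_trmx HG mulmxA.
Qed.

Lemma bZ_sym G (x y : 'rV[int]_m) : G^T = G -> bZ G x y = bZ G y x.
Proof.
move=> HG; rewrite /bZ [LHS]entryT.
by rewrite !trmx_mul trmxK HG mulmxA.
Qed.

Lemma bKDr (K : comNzRingType) G (x y z : 'rV[K]_m) : G^T = G -> bK G z (x + y) = bK G z x + bK G z y.
Proof. by move=> HG; rewrite !(bK_sym z) // bKDl. Qed.
Lemma bKBr (K : comNzRingType) G (x y z : 'rV[K]_m) : G^T = G -> bK G z (x - y) = bK G z x - bK G z y.
Proof. by move=> HG; rewrite !(bK_sym z) // bKBl. Qed.
Lemma bKZr (K : comNzRingType) G (c : K) (x z : 'rV[K]_m) : G^T = G -> bK G z (c *: x) = c * bK G z x.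
Proof. by move=> HG; rewrite !(bK_sym z) // bKZl. Qed.

Lemma delta_entry (K : comNzRingType) (M : 'M[K]_m) (i j : 'I_m) :
  ((delta_mx 0 i : 'rV[K]_m) *m M *m (delta_mx 0 j : 'rV[K]_m)^T) 0 0 = M i j.
Proof. by rewrite -rowE trmx_delta -colE !mxE. Qed.

Lemma bK_iso (K : comNzRingType) G H (x y : 'rV[K]_m) :
  H *m G *m H^T = G -> bK G (x *m map_mx (iK K) H) (y *m map_mx (iK K) H) = bK G x y.
Proof.
move=> HH; rewrite /bK trmx_mul.
set HK := map_mx _ H; set GK := map_mx _ G.
have -> : x *m HK *m GK *m (HK^T *m y^T) = x *m (HK *m GK *m HK^T) *m y^T by rewrite !mulmxA.
by rewrite /HK /GK map_trmx -!map_mxM HH.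
Qed.

Lemma bZ_iso G H (x y : 'rV[int]_m) :
  H *m G *m H^T = G -> bZ G (x *m H) (y *m H) = bZ G x y.
Proof.
move=> HH; rewrite /bZ trmx_mul.
have -> : x *m H *m G *m (H^T *m y^T) = x *m (H *m G *m H^T) *m y^T by rewrite !mulmxA.
by rewrite HH.
Qed.

Lemma iso_of_aut G F : lattice_aut G setT F -> F *m G *m F^T = G.
Proof.
case=> _ _ H; apply/matrixP => i j.
have := H (delta_mx 0 i) (delta_mx 0 j) I I.
rewrite /bZ !delta_entry => <-.
by rewrite -[LHS]delta_entry trmx_mul !mulmxA.
Qed.

Lemma inv_of_aut G F : lattice_aut G setT F -> exists Fi : 'M[int]_m, Fi *m F = 1%:M /\ F *m Fi = 1%:M.
Proof.
case=> _ Hs _.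
have Hx i : exists x : 'rV[int]_m, x *m F = delta_mx 0 i.
  by have [x _ Hx] := Hs (delta_mx 0 i) I; exists x.
pose xi i := projT1 (cid (Hx i)).
have Hxi i : xi i *m F = delta_mx 0 i by rewrite /xi; case: cid.
pose Fi := \matrix_(i < m) xi i.
have E : Fi *m F = 1%:M.
  by apply/row_matrixP => i; rewrite row_mul rowK Hxi row1.
by exists Fi; split => //; apply: mulmx1C.
Qed.

Lemma iso_inv G H Hi : H *m G *m H^T = G -> Hi *m H = 1%:M -> Hi *m G *m Hi^T = G.
Proof.
move=> HH HiH.
by rewrite -{1}HH !mulmxA HiH mul1mx -mulmxA -trmx_mul HiH trmx1 mulmx1.
Qed.

End Alg.

Section Z3.
Variable m : nat.
Notation iK K := (fun z : int => (z%:~R : K)).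

Lemma z3_part (G F : 'M[int]_m) (v : 'rV[int]_m) :
  G^T = G -> bZ G v v = 2 -> v *m F = v ->
  z3_direct G (Lv G v) F -> z3_direct G setT F.
Proof.
move=> Hs Hvv HvF HD x [Hsp Hdual] [k [w _ Hw]].
have [z0 Hz0] := Hdual v I.
pose N := (3 ^ k)%N.
have HN : (3 ^+ k : rat) = N%:R by rewrite /N natrX.
have N0 : (N%:R : rat) != 0 by rewrite pnatr_eq0 /N expn_eq0.
rewrite HN in Hw.
pose FQ := map_mx (iK rat) F.
pose u := 2 *: w - (N%:Z * z0) *: v.
pose y2 := 2 *: x - z0%:~R *: toK rat v.
have Hwv : bZ G w v = N%:Z * z0.
  apply/(@intr_inj rat); rewrite -(bK_toK rat) Hw bKZl Hz0.
  by rewrite rmorphM /=.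
have Hu : toK rat u = N%:R *: y2.
  rewrite /u /y2 toKB !toKZ Hw scalerBr scalerA scalerA rmorphM /=.
  by rewrite [in RHS]scalerA [in RHS](mulrC N%:R)...
have Lu : Lv G v u.
  rewrite /Lv /=; apply/(@intr_inj rat); rewrite -(bK_toK rat) Hu bKZl /y2 bKBl !bKZl Hz0 bK_toK Hvv.
  by rewrite [z0%:~R * _]mulrC subrr mulr0.
have Hy2 : dual G (Lv G v) y2.
  split.
    exists 1%N, (fun _ => (N%:R)^-1), (fun _ => u); split => // .
    by rewrite big_ord1 Hu scalerA mulVf // scale1r.
  move=> y Ly.
  have [z1 Hz1] := Hdual y I.
  exists (2 * z1).
  rewrite /y2 bKBl !bKZl Hz1 bK_toK bZ_sym // Ly.
  by rewrite mulr0 subr0 rmorphM.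
have Hy3 : exists k0 : nat, embQ (Lv G v) (3 ^+ k0 *: y2).
  by exists k; rewrite HN; exists u => //.
have [u' Lu' Hu'] := HD y2 Hy2 Hy3.
have HvQ : toK rat v *m FQ = toK rat v by rewrite -toKM HvF.
have E2 : y2 *m FQ - y2 = 2 *: (x *m FQ - x).
  rewrite /y2 mulmxBl -!scalemxAl HvQ scalerBr.
  by rewrite opprB addrA subrK.
have EN : N%:R *: (x *m FQ - x) = toK rat (w *m F - w).
  by rewrite toKB toKM Hw scalerBr scalemxAl.
exists (w *m F - w - (N./2)%:Z *: u') => //.
have Nodd : odd N by rewrite /N oddX orbT.
rewrite toKB toKZ Hu' E2 -EN scalerA.
have -> : ((N./2)%:Z)%:~R * 2 = (N%:R : rat) - 1.
  rewrite -{2}(odd_double_half N) Nodd.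
  by rewrite natrD addrC addKr -muln2 natrM.
by rewrite scalerBl scale1r opprB addrC subrK.
Qed.
End Z3.
Section S.
Variable R : realType.

Lemma sum_cont (T : topologicalType) (V : normedModType R) k (f : 'I_k -> T -> V) x :
  (forall i, {for x, continuous (f i)}) -> {for x, continuous (fun y => \sum_(i < k) f i y)}.
Proof.
elim: k f => [|k IH] f H.
  have -> : (fun y => \sum_(i < 0) f i y) = (fun=> 0) by apply: funext => y; rewrite big_ord0.
  exact: cvg_cst.
have -> : (fun y => \sum_(i < k.+1) f i y) =
   (fun y => \sum_(i < k) f (widen_ord (leqnSn k) i) y) + f ord_max.
  by apply: funext => y; rewrite big_ord_recr.
apply: continuousD; last exact: H.
exact: (IH (fun i => f (widen_ord (leqnSn k) i))).
Qed.

Lemma mulmx_cont m p (M : 'M[R]_(m, p)) :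
  continuous (fun x : 'rV[R^o]_m => (x *m M : 'rV[R^o]_p)).
Proof.
move=> x.
have E : (fun y : 'rV[R^o]_m => (y *m M : 'rV[R^o]_p)) =
   (fun y => \sum_(i < m) (y 0 i : R^o) *: (row i M : 'rV[R^o]_p)).
  apply: funext => y; rewrite mulmx_sum_row; apply: eq_bigr => i _; done.
rewrite E; apply: sum_cont => i.
apply: continuousZr_tmp.
exact: coord_continuous.
Qed.

Lemma entry_cont m (M : 'M[R]_(m, 1)) :
  continuous (fun x : 'rV[R^o]_m => ((x *m M) 0 0 : R^o)).
Proof.
move=> x.
have E : (fun y : 'rV[R^o]_m => ((y *m M) 0 0 : R^o)) =
   (fun y => \sum_(i < m) (y 0 i : R^o) *: (M i 0 : R^o)).
  apply: funext => y; rewrite mxE; apply: eq_bigr => i _; done.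
rewrite E; apply: sum_cont => i.
apply: continuousZr_tmp.
exact: coord_continuous.
Qed.
End S.

Section Geo.
Variable R : realType.
Variable m : nat.
Variable G : 'M[int]_m.
Hypothesis Hs : G^T = G.
Notation iK K := (fun z : int => (z%:~R : K)).
Notation GK := (map_mx (iK R) G).

Lemma bK_cont (c : 'rV[R]_m) : continuous (fun x : 'rV[R^o]_m => (bK G x c : R^o)).
Proof.
have -> : (fun x : 'rV[R^o]_m => (bK G x c : R^o)) = (fun x => ((x *m (GK *m c^T)) 0 0 : R^o)).
  by apply: funext => x; rewrite /bK mulmxA.
exact: entry_cont.
Qed.

Lemma act_cont (H : 'M[int]_m) : continuous (fun x : 'rV[R^o]_m => (x *m map_mx (iK R) H : 'rV[R^o]_m)).
Proof. exact: mulmx_cont. Qed.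

Lemma sign_in (A : set 'rV[R^o]_m) x0 c : connected A -> A x0 ->
  (forall w, A w -> bK G w c != 0) -> forall w, A w -> 0 < bK G w c * bK G x0 c.
Proof.
move=> cA Ax0 Hn w Aw.
set f := fun x : 'rV[R^o]_m => (bK G x c : R^o).
have cf : connected (f @` A).
  apply: connected_continuous_connected => //; apply: continuous_subspaceT; exact: bK_cont.
have /connected_intervalP iI := cf.
have fw := Hn w Aw; have fx := Hn x0 Ax0.
rewrite ltNge; apply/negP => Hle.
have [a Aa fa] : (f @` A) 0.
  have [Hc|Hc] := leP (f w) (f x0).
    apply: (iI (f w) (f x0)); [by exists w|by exists x0|].
    move: Hc; rewrite /f /= => Hc; apply/andP; split; nra.
  apply: (iI (f x0) (f w)); [by exists x0|by exists w|].
  move: Hc; rewrite /f /= => Hc; apply/andP; split; nra.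
by move: (Hn a Aa); rewrite -/(f a) fa eqxx.
Qed.

Lemma sign_closure (A : set 'rV[R^o]_m) x0 c : connected A -> A x0 ->
  (forall w, A w -> bK G w c != 0) -> forall z, closure A z -> 0 <= bK G z c * bK G x0 c.
Proof.
move=> cA Ax0 Hn.
set S := [set z : 'rV[R^o]_m | (0 : R^o) <= bK G z c * bK G x0 c].
have cS : closed S.
  have -> : S = (fun z : 'rV[R^o]_m => (bK G z (bK G x0 c *: c) : R^o)) @^-1` [set x | 0 <= x].
    by apply: funext => z; rewrite /S /preimage /= bKZr // mulrC.
  apply: closed_comp; last exact: closed_ge.
  move=> z _; exact: bK_cont.
have AS : A `<=` S by move=> w Aw; apply/ltW; exact: (sign_in cA Ax0 Hn Aw).
move=> z /(closureS AS); by rewrite -(closure_id S).1.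
Qed.
End Geo.

Lemma sq_pos (R : realType) (x : R) : x != 0 -> 0 < x * x.
Proof. by move=> hx; rewrite lt0r mulf_neq0 //= -expr2 sqr_ge0. Qed.

Section Sig.
Variable R : realType.
Variable n : nat.
Variable G : 'M[int]_n.+1.
Hypothesis Hs : G^T = G.
Notation iK K := (fun z : int => (z%:~R : K)).
Notation GK := (map_mx (iK R) G).
Variable P : 'M[R]_n.+1.
Hypothesis HP : P \in unitmx.
Hypothesis HD : P *m GK *m P^T = diag_mx (\row_(i < n.+1) (if i == ord_max then -1 else 1)).

Definition ell (x : 'rV[R]_n.+1) := (x *m invmx P) 0 ord_max.

Lemma light_nonneg (x : 'rV[R]_n.+1) : ell x = 0 -> 0 <= bK G x x.
Proof.
rewrite /ell => Hl.
set x' := x *m invmx P in Hl.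
have Ex : x = x' *m P by rewrite /x' mulmxKV.
clearbody x'.
rewrite /bK Ex trmx_mul.
have -> : x' *m P *m GK *m (P^T *m x'^T) = x' *m (P *m GK *m P^T) *m x'^T by rewrite !mulmxA.
rewrite HD mul_mx_diag mxE; apply: sumr_ge0 => j _; rewrite !mxE.
case: eqP => [->|_]; first by rewrite Hl !mul0r.
by rewrite mulr1 -expr2 sqr_ge0.
Qed.

Lemma timelike_ne0 (x y : 'rV[R]_n.+1) : bK G x x < 0 -> bK G y y < 0 -> bK G x y != 0.
Proof.
move=> hx hy.
have ellL a b (u w : 'rV[R]_n.+1) : ell (a *: u - b *: w) = a * ell u - b * ell w.
  by rewrite /ell mulmxBl -!scalemxAl !mxE.
have lx : ell x != 0.
  by apply/eqP => /light_nonneg; rewrite leNgt hx.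
have ly : ell y != 0.
  by apply/eqP => /light_nonneg; rewrite leNgt hy.
set c := ell y *: x - ell x *: y.
have : 0 <= bK G c c by apply: light_nonneg; rewrite /c ellL mulrC subrr.
rewrite /c !bKBl !bKZl !(bKBr _ _ _ Hs) !(bKZr _ _ _ Hs) (bK_sym y x Hs).
apply/contraTneq => ->.
have := sq_pos lx; have := sq_pos ly.
rewrite -ltNge; nra.
Qed.
End Sig.

Section Lvs.
Variable R : realType.
Variable m : nat.
Variable G : 'M[int]_m.
Hypothesis Hs : G^T = G.
Variable v : 'rV[int]_m.
Hypothesis Hvv : bZ G v v = 2.
Notation iK K := (fun z : int => (z%:~R : K)).

Lemma toK_delta (K : comNzRingType) (i : 'I_m) : toK K (delta_mx 0 i) = delta_mx 0 i.
Proof. by rewrite /toK map_delta_mx. Qed.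

Lemma kspanT (x : 'rV[R]_m) : kspan (K:=R) setT x.
Proof.
exists m, (fun i => x 0 i), (fun i => delta_mx 0 i); split => //.
rewrite {1}(row_sum_delta x); apply: eq_bigr => i _; by rewrite toK_delta.
Qed.

Lemma kspan_orth (x : 'rV[R]_m) : kspan (K:=R) (Lv G v) x -> bK G x (toK R v) = 0.
Proof.
case=> k [c [w [Hw ->]]]; rewrite bKsuml big1 // => i _.
by have := Hw i; rewrite /Lv /= bKZl bK_toK => ->; rewrite mulr0.
Qed.

Lemma orth_kspan (x : 'rV[R]_m) : bK G x (toK R v) = 0 -> kspan (K:=R) (Lv G v) x.
Proof.
move=> H0.
pose b i := bZ G (delta_mx 0 i) v.
pose w i := 2 *: delta_mx 0 i - b i *: v.
have Lw i : Lv G v (w i).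
  rewrite /Lv /=; apply/(@intr_inj R); rewrite -(bK_toK R) /w toKB !toKZ bKBl !bKZl.
  by rewrite !bK_toK Hvv /b [X in _ - X]mulrC subrr.
have Hx : bK G x (toK R v) = \sum_i x 0 i * (b i)%:~R.
  rewrite {1}(row_sum_delta x) bKsuml; apply: eq_bigr => i _.
  by rewrite bKZl -(toK_delta R) bK_toK.
exists m, (fun i => x 0 i / 2), w; split => //.
rewrite (eq_bigr (fun i => x 0 i *: delta_mx 0 i - (x 0 i / 2 * (b i)%:~R) *: toK R v)); last first.
  move=> i _; rewrite /w toKB !toKZ toK_delta scalerBr !scalerA.
  congr (_ *: _ - _); by rewrite divfK ?pnatr_eq0.
rewrite sumrB -row_sum_delta -scaler_suml.
have -> : \sum_i (x 0 i / 2 * (b i)%:~R) = 0.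
  under eq_bigr do rewrite mulrAC.
  by rewrite -mulr_suml -Hx H0 mul0r.
by rewrite scale0r subr0.
Qed.

Lemma bZDl (x y z : 'rV[int]_m) : bZ G (x + y) z = bZ G x z + bZ G y z.
Proof. by rewrite /bZ !mulmxDl mxE. Qed.
Lemma bZZl (c : int) (x z : 'rV[int]_m) : bZ G (c *: x) z = c * bZ G x z.
Proof. by rewrite /bZ -!scalemxAl mxE. Qed.
Lemma bZBl (x y z : 'rV[int]_m) : bZ G (x - y) z = bZ G x z - bZ G y z.
Proof. by rewrite -scaleN1r bZDl bZZl mulN1r. Qed.

Lemma phi_Lv_T u : Phi G (Lv G v) u -> Phi G setT u.
Proof.
have key k : is_kroot G (Lv G v) k u -> forall w, bZ G u (2 *: w - bZ G w v *: v) = 2 * bZ G u w.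
  case=> Lu _ w; rewrite bZ_sym // bZBl !bZZl (bZ_sym v u) // Lu mulr0 subr0.
  by rewrite bZ_sym.
have Ll w : Lv G v (2 *: w - bZ G w v *: v).
  by rewrite /Lv /= bZBl !bZZl Hvv mulrC subrr.
case=> [[Lu [Huu Hd]]|[Lu [Huu Hd]]]; [left|right]; split => //; split => // w _.
  by apply: dvdz_mulr; rewrite dvdzz.
have := Hd _ (Ll w); rewrite (key 6%:Z) //.
move=> /dvdzP [q Hq]; apply/dvdzP; exists (bZ G u w - q).
rewrite mulrBl -Hq; ring.
Qed.

Section Act.
Variables (H Hi : 'M[int]_m).
Hypotheses (HH : H *m G *m H^T = G) (HiH : Hi *m H = 1%:M) (HHi : H *m Hi = 1%:M) (HvH : v *m H = v).

Lemma HvHi : v *m Hi = v.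
Proof. by rewrite -{1}HvH -mulmxA HHi mulmx1. Qed.
Lemma HHiso : Hi *m G *m Hi^T = G.
Proof. exact: iso_inv HH HiH. Qed.

Lemma Lv_act w : Lv G v w -> Lv G v (w *m H).
Proof. by rewrite /Lv /= -{2}HvH bZ_iso. Qed.
Lemma Lv_actI w : Lv G v w -> Lv G v (w *m Hi).
Proof. by rewrite /Lv /= -{2}HvHi bZ_iso // HHiso. Qed.

Lemma phi_act u : Phi G (Lv G v) u -> Phi G (Lv G v) (u *m H).
Proof.
have K k : is_kroot G (Lv G v) k u -> is_kroot G (Lv G v) k (u *m H).
  case=> Lu [Huu Hd]; split; first exact: Lv_act.
  split; first by rewrite bZ_iso.
  move=> w Lw; have -> : w = w *m Hi *m H by rewrite -mulmxA HiH mulmx1.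
  by rewrite bZ_iso //; apply: Hd; apply: Lv_actI.
by case=> [h|h]; [left|right]; apply: K.
Qed.
End Act.
End Lvs.

Lemma closure_stable (R : realType) m (A : set 'rV[R^o]_m) (f : 'rV[R^o]_m -> 'rV[R^o]_m) :
  continuous f -> (forall x, A x -> A (f x)) -> forall x, closure A x -> closure A (f x).
Proof.
move=> fc HA x Hx B HB.
have : nbhs x (f @^-1` B) by apply: fc.
move=> /Hx [a [Aa Ba]]; exists (f a); split => //; exact: HA.
Qed.

Section Main.
Variable R : realType.
Variable n : nat.
Variable G : 'M[int]_n.+1.
Hypothesis Hs : G^T = G.
Notation iK K := (fun z : int => (z%:~R : K)).
Notation GK := (map_mx (iK R) G).
Variable P : 'M[R]_n.+1.
Hypothesis HP : P \in unitmx.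
Hypothesis HD : P *m GK *m P^T = diag_mx (\row_(i < n.+1) (if i == ord_max then -1 else 1)).
Variable v : 'rV[int]_n.+1.
Hypothesis Hvv : bZ G v v = 2.
Variable x0 : 'rV[R]_n.+1.
Hypothesis Hx0 : reg G setT x0.
Variables (H Hi : 'M[int]_n.+1).
Hypotheses (HH : H *m G *m H^T = G) (HiH : Hi *m H = 1%:M) (HHi : H *m Hi = 1%:M) (HvH : v *m H = v).
Notation HK := (map_mx (iK R) H).

Lemma toK_act (u : 'rV[int]_n.+1) : toK R u *m HK = toK R (u *m H).
Proof. by rewrite toKM. Qed.

Lemma cone_act x : cone G (Lv G v) x -> cone G (Lv G v) (x *m HK).
Proof.
case=> Hk Hn; split; last by rewrite bK_iso.
apply: orth_kspan => //.
by rewrite -HvH -toK_act bK_iso // kspan_orth.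
Qed.

Lemma reg_act x : reg G (Lv G v) x -> reg G (Lv G v) (x *m HK).
Proof.
case=> Hc Hp; split; first exact: cone_act.
move=> u Pu.
have -> : toK R u = toK R (u *m Hi) *m HK by rewrite toK_act -mulmxA HiH mulmx1.
rewrite bK_iso //; apply: Hp.
exact: (phi_act (HHiso HH HiH) HHi HiH (HvHi HHi HvH)).
Qed.

Definition C0 := chamber G setT x0.

Lemma C0_conn : connected C0.
Proof. exact: component_connected. Qed.
Lemma C0_x0 : C0 x0.
Proof. exact: connected_component_refl. Qed.
Lemma C0_reg w : C0 w -> reg G setT w.
Proof. exact: connected_component_sub. Qed.

Lemma root_sign u z : Phi G setT u -> closure C0 z -> 0 <= bK G z (toK R u) * bK G x0 (toK R u).
Proof.
move=> Pu; apply: (sign_closure Hs C0_conn C0_x0).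
by move=> w /C0_reg [_ Hw]; apply: Hw.
Qed.

Lemma time_sign y z : bK G y y < 0 -> closure C0 z -> 0 <= bK G z y * bK G x0 y.
Proof.
move=> hy; apply: (sign_closure Hs C0_conn C0_x0).
move=> w /C0_reg [[_ hw] _]; exact: (timelike_ne0 Hs HP HD).
Qed.

Lemma x0_cone : bK G x0 x0 < 0.
Proof. by case: Hx0 => [[]]. Qed.

Variable y0 : 'rV[R]_n.+1.
Hypothesis Hy0c : cell_lift G setT x0 y0.
Hypothesis Hy0v : bK G y0 (toK R v) = 0.
Hypothesis Hy0n : \forall z \near (y0 : 'rV[R^o]_n.+1),
   (kspan (K:=R) setT z /\ bK G z (toK R v) = 0) -> cell_lift G setT x0 z.
Hypothesis Hy1c : cell_lift G setT x0 (y0 *m HK).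

Lemma y0_reg : reg G (Lv G v) y0.
Proof.
case: Hy0c => [[_ hyy] hcl].
split; first by split => //; exact: orth_kspan.
move=> u Pu; apply/eqP => H0.
have uT := phi_Lv_T Hs Hvv Pu.
have s0 : bK G x0 (toK R u) != 0 by case: Hx0 => _; apply.
have Lu : bZ G u v = 0 by case: Pu => [[Lu _]|[Lu _]].
have kuu : 0 < bK G (toK R u) (toK R u).
  rewrite bK_toK; case: Pu => [[_ [-> _]]|[_ [-> _]]]; by rewrite ltr0n.
have uv : bK G (toK R u) (toK R v) = 0 by rewrite bK_toK Lu.
pose g := fun t : R^o => (y0 + t *: toK R u : 'rV[R^o]_n.+1).
have gc : continuous g.
  move=> t; rewrite /g.
  have -> : (fun t : R^o => (y0 + t *: toK R u : 'rV[R^o]_n.+1)) = (fun=> (y0 : 'rV[R^o]_n.+1)) + (fun t : R^o => t *: (toK R u : 'rV[R^o]_n.+1)) by [].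
  apply: continuousD; first exact: cvg_cst.
  exact: continuousZr_tmp.
have g0 : g 0 = y0 by rewrite /g scale0r addr0.
have Hg : \forall t \near (0 : R^o), (kspan (K:=R) setT (g t) /\ bK G (g t) (toK R v) = 0) -> cell_lift G setT x0 (g t).
  have E : nbhs (g 0) [set z : 'rV[R^o]_n.+1 | (kspan (K:=R) setT z /\ bK G z (toK R v) = 0) -> cell_lift G setT x0 z] by rewrite g0.
  exact: (gc 0 _ E).
have Hgt t : closure C0 (g t) -> 0 <= t * bK G (toK R u) (toK R u) * bK G x0 (toK R u).
  move=> /(root_sign uT); rewrite /g bKDl bKZl H0 add0r.
  done.
have Hgg t : (kspan (K:=R) setT (g t) /\ bK G (g t) (toK R v) = 0).
  by split; [exact: kspanT | rewrite /g bKDl bKZl uv mulr0 addr0].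
case/nbhs_ballP: Hg => e e0 He.
have H1 : 0 <= (e / 2) * bK G (toK R u) (toK R u) * bK G x0 (toK R u).
  have B1 : ball (0 : R^o) e (e / 2).
    by rewrite -ball_normE /ball_ /= sub0r normrN ger0_norm ?divr_ge0 ?ltW // ltr_pdivrMr // ltr_pMr // ltr1n.
  have := He _ B1 => /= /(_ (Hgg _)) [_ Hcl]; exact: Hgt.
have H2 : 0 <= (- (e / 2)) * bK G (toK R u) (toK R u) * bK G x0 (toK R u).
  have B1 : ball (0 : R^o) e (- (e / 2)).
    by rewrite -ball_normE /ball_ /= sub0r opprK ger0_norm ?divr_ge0 ?ltW // ltr_pdivrMr // ltr_pMr // ltr1n.
  have := He _ B1 => /= /(_ (Hgg _)) [_ Hcl]; exact: Hgt.
set a := bK G (toK R u) (toK R u) in kuu H1 H2.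
set s := bK G x0 (toK R u) in H1 H2 s0.
have e2 : 0 < e / 2 by rewrite divr_gt0.
move: H1 H2; rewrite -[e / 2 * a * s]mulrA -[- (e / 2) * a * s]mulrA mulNr oppr_ge0 (pmulr_rge0 _ e2) (pmulr_rle0 _ e2) => H1 H2.
have : a * s == 0 by rewrite eq_le H1 H2.
by rewrite mulf_eq0 (gt_eqF kuu) (negbTE s0).
Qed.

Lemma y0_facts : closure C0 y0 /\ bK G y0 y0 < 0.
Proof. by case: Hy0c => [[_ h] hcl]. Qed.
Lemma y1_facts : closure C0 (y0 *m HK) /\ bK G (y0 *m HK) (y0 *m HK) < 0.
Proof. by case: Hy1c => [[_ h] hcl]. Qed.

Lemma x0y0 : bK G x0 y0 < 0.
Proof.
have [hcl hyy] := y0_facts.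
have := time_sign hyy hcl.
have := timelike_ne0 Hs HP HD x0_cone hyy.
nra.
Qed.

Lemma y1y0 : bK G (y0 *m HK) y0 < 0.
Proof.
have [hcl0 hyy] := y0_facts.
have [hcl hy1] := y1_facts.
have := time_sign hyy hcl.
have := timelike_ne0 Hs HP HD hy1 hyy.
have := x0y0.
nra.
Qed.

Lemma seg_reg (t : R) : 0 <= t <= 1 -> reg G (Lv G v) ((1 - t) *: y0 + t *: (y0 *m HK)).
Proof.
case/andP => t0 t1.
have y1r := reg_act y0_reg.
have y0r := y0_reg.
have [[k1 _] _] := y1r.
have y1v := kspan_orth k1.
split; first split.
- by apply: orth_kspan => //; rewrite bKDl !bKZl Hy0v y1v !mulr0 addr0.
- rewrite bKDl !bKZl !(bKDr _ _ _ Hs) !(bKZr _ _ _ Hs) (bK_sym y0 _ Hs).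
  have := y1y0; have [_ a0] := y0_facts; have [_ c0] := y1_facts.
  move=> b0.
  set a := bK G y0 y0 in a0 *; set c := bK G _ _ in c0 *; set b := bK G _ y0 in b0 *.
  have p2 : 0 <= t * (1 - t) by apply: mulr_ge0; rewrite ?subr_ge0.
  have q2 : t * (1 - t) * b <= 0 by apply: mulr_ge0_le0 => //; exact: ltW.
  have q1 : (1 - t) * (1 - t) * a < 0 \/ t * t * c < 0.
    case: (lerP t (1/2)) => ht; [left|right]; rewrite pmulr_rlt0 //; apply: mulr_gt0; lra.
  have q1' : (1 - t) * (1 - t) * a <= 0 by apply: mulr_ge0_le0; [nra|exact: ltW].
  have q3' : t * t * c <= 0 by apply: mulr_ge0_le0; [nra|exact: ltW].
  case: q1 => q1; nra.
- move=> u Pu.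
  have uT := phi_Lv_T Hs Hvv Pu.
  have s0 : bK G x0 (toK R u) != 0 by case: Hx0 => _; apply.
  have a0 : bK G y0 (toK R u) != 0 by case: y0r => _; apply.
  have b0 : bK G (y0 *m HK) (toK R u) != 0 by case: y1r => _; apply.
  have ha := root_sign uT (proj1 y0_facts).
  have hb := root_sign uT (proj1 y1_facts).
  have ha' : 0 < bK G y0 (toK R u) * bK G x0 (toK R u) by rewrite lt0r mulf_neq0.
  have hb' : 0 < bK G (y0 *m HK) (toK R u) * bK G x0 (toK R u) by rewrite lt0r mulf_neq0.
  rewrite bKDl !bKZl; apply/eqP => h.
  have : ((1 - t) * bK G y0 (toK R u) + t * bK G (y0 *m HK) (toK R u)) * bK G x0 (toK R u) = 0.
    by rewrite h mul0r.
  nra.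
Qed.

Lemma y1_comp : connected_component (reg G (Lv G v) : set 'rV[R^o]_n.+1) y0 (y0 *m HK).
Proof.
pose seg := fun t : R^o => ((1 - t) *: y0 + t *: (y0 *m HK) : 'rV[R^o]_n.+1).
have cs : continuous seg.
  move=> t; rewrite /seg.
  have -> : (fun t : R^o => ((1 - t) *: y0 + t *: (y0 *m HK) : 'rV[R^o]_n.+1)) =
    (fun t : R^o => (1 - t) *: (y0 : 'rV[R^o]_n.+1)) + (fun t : R^o => t *: (y0 *m HK : 'rV[R^o]_n.+1)) by [].
  apply: continuousD; apply: continuousZr_tmp => //.
  have -> : (fun t : R^o => 1 - t) = (fun=> (1 : R^o)) - id by [].
  by apply: continuousB => //; exact: cvg_cst.
have := @connected_component_max _ (reg G (Lv G v) : set 'rV[R^o]_n.+1) (seg @` `[(0 : R), 1]) y0.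
have s0 : seg 0 = y0 by rewrite /seg subr0 scale1r scale0r addr0.
have s1 : seg 1 = y0 *m HK by rewrite /seg subrr scale0r scale1r add0r.
apply.
- by exists 0 => //; rewrite /= in_itv /= lexx ler01.
- move=> _ [t ht <-]; apply: seg_reg; move: ht; by rewrite /= in_itv.
- apply: connected_continuous_connected; first exact: segment_connected.
  exact: continuous_subspaceT.
- by exists 1 => //; rewrite /= in_itv /= lexx ler01.
Qed.

Lemma main_incl w : chamber G (Lv G v) y0 w -> chamber G (Lv G v) y0 (w *m HK).
Proof.
move=> Cw.
set C := chamber G (Lv G v) y0.
have Cy0 : C y0 by apply: connected_component_refl; exact: y0_reg.
rewrite /C /chamber (same_connected_component y1_comp).
apply: (@connected_component_max _ _ ((fun x : 'rV[R^o]_n.+1 => (x *m HK : 'rV[R^o]_n.+1)) @` C)).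
- by exists y0.
- move=> _ [x Cx <-]; apply: reg_act; exact: connected_component_sub Cx.
- apply: connected_continuous_connected; first exact: component_connected.
  apply: continuous_subspaceT; exact: act_cont.
- by exists w.
Qed.

End Main.

Lemma act_eqS (R : realType) m (F Fi : 'M[int]_m) (S : set 'rV[R]_m) :
  Fi *m F = 1%:M ->
  (forall x, S x -> S (x *m map_mx (fun z : int => (z%:~R : R)) F)) ->
  (forall x, S x -> S (x *m map_mx (fun z : int => (z%:~R : R)) Fi)) -> act F S = S.
Proof.
move=> FiF HF HFi; apply/seteqP; split.
  by move=> _ [x Sx <-]; apply: HF.
move=> x Sx; exists (x *m map_mx (fun z : int => (z%:~R : R)) Fi); first exact: HFi.
by rewrite -mulmxA -map_mxM FiF map_mx1 mulmx1.
Qed.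

Unset Implicit Arguments.
Theorem lemma7p6p1 (R : realType) (n : nat) (G F : 'M[int]_n.+1)
    (x0 : 'rV[R]_n.+1) (v : 'rV[int]_n.+1) :
  signature_n1 R G ->
  disc_Z3_2per G setT ->
  full_rank R G setT ->
  reg G setT x0 ->
  lattice_aut G setT F ->
  act F (cell G setT x0) = cell G setT x0 ->
  act F (cell_lift G setT x0) = cell_lift G setT x0 ->
  Phi_b G setT x0 v ->
  bZ G v v = 2 ->
  v *m F = v ->
  z3_reversing G setT F ->
  z3_reversing G (Lv G v) F /\
  exists y0 : 'rV[R]_n.+1,
    [/\ reg G (Lv G v) y0,
        act F (cell G (Lv G v) y0) = cell G (Lv G v) y0 &
        act F (cell_lift G (Lv G v) y0) = cell_lift G (Lv G v) y0].
Proof.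
move=> [Hs [P HP HD]] _ _ Hx0 Haut _ Hlift [HPv _ [y [Hyc Hyv Hyn]]] Hvv HvF Hrev.
split.
  by move=> HD3; apply: Hrev; exact: (z3_part Hs Hvv HvF HD3).
have HF := iso_of_aut Haut.
have [Fi [FiF FFi]] := inv_of_aut Haut.
have HFi := HHiso HF FiF.
have HvFi := HvHi FFi HvF.
have Hy1 : cell_lift G setT x0 (y *m map_mx (fun z : int => (z%:~R : R)) F).
  by rewrite -Hlift; exists y.
have Hy1i : cell_lift G setT x0 (y *m map_mx (fun z : int => (z%:~R : R)) Fi).
  move: Hyc; rewrite -{1}Hlift => -[w Hw <-].
  by rewrite -mulmxA -map_mxM FFi map_mx1 mulmx1.
have incF := main_incl Hs HP HD Hvv Hx0 HF FiF FFi HvF Hyc Hyv Hyn Hy1.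
have incFi := main_incl Hs HP HD Hvv Hx0 HFi FFi FiF HvFi Hyc Hyv Hyn Hy1i.
have coneF := cone_act (R:=R) Hvv HF HvF.
have coneFi := cone_act (R:=R) Hvv HFi HvFi.
have clF := closure_stable (@act_cont R _ F) incF.
have clFi := closure_stable (@act_cont R _ Fi) incFi.
have liftF x : cell_lift G (Lv G v) y x -> cell_lift G (Lv G v) y (x *m map_mx (fun z : int => (z%:~R : R)) F).
  by case=> h1 h2; split; [apply: coneF | apply: clF].
have liftFi x : cell_lift G (Lv G v) y x -> cell_lift G (Lv G v) y (x *m map_mx (fun z : int => (z%:~R : R)) Fi).
  by case=> h1 h2; split; [apply: coneFi | apply: clFi].
exists y; split.
- exact: (y0_reg Hs Hvv Hx0 Hyc Hyv Hyn).
- apply: act_eqS FiF _ _.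
  + move=> x [h|[w hw <-]]; [left; exact: liftF|right].
    by exists (w *m map_mx (fun z : int => (z%:~R : R)) F); [apply: liftF|rewrite mulNmx].
  + move=> x [h|[w hw <-]]; [left; exact: liftFi|right].
    by exists (w *m map_mx (fun z : int => (z%:~R : R)) Fi); [apply: liftFi|rewrite mulNmx].
- exact: act_eqS FiF liftF liftFi.
Qed.
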